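(* Let $(X,d)$ be a separable complete metric space, $(\Omega,\mathsf{F},\mathbb{P})$ a probability space with a filtration $(\mathsf{F}_n)$, and $S\subseteq X$ non-empty and closed. Let $\phi:X\times X\to[0,\infty)$ be a Carath\'eodory distance with $\phi(x,x)=0$ for all $x\in X$ that satisfies the weak quasi-triangle inequality with a concave nondecreasing function $H:[0,\infty)\to[0,\infty)$. Let $(x_n)$ be an $X$-valued stochastic process adapted to $(\mathsf{F}_n)$ which is stochastically $\phi$-quasi-Fej\'er monotone w.r.t.\ $S$ and $(\mathsf{F}_n)$, i.e.\ there are $(\zeta_n),(\xi_n)\in\ell^1_+(\mathsf{F}_n)$ with $\mathbb{E}[\phi(z,x_{n+1})\mid\mathsf{F}_n]\le(1+\zeta_n)\phi(z,x_n)+\xi_n$ a.s.\ for all $n\in\mathbb{N}$ and all $z\in S$. Suppose that $\mathbb{E}[\phi(o,x_n)]<\infty$ for all $n\in\mathbb{N}$, for some fixed $o\in S$. Then $(x_n)$ is strongly stochastically $\phi$-quasi-Fej\'er monotone w.r.t.\ $S$ and $(\mathsf{F}_n)$ (with the same error sequences).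
   Context: $X$ carries its Borel $\sigma$-algebra. A Carath\'eodory distance is a function $\phi:X\times X\to[0,\infty)$ continuous in its left argument and Borel measurable in its right argument. $\phi$ satisfies the weak quasi-triangle inequality with $H$ if $\phi(x,y)\le H(\phi(x,o)+\phi(y,o))$ for all $x,y,o\in X$. $\ell^1_+(\mathsf{F}_n)$ is the set of sequences of nonnegative random variables $(\xi_n)$ with $\xi_n$ $\mathsf{F}_n$-measurable and $\sum_n\xi_n<\infty$ a.s. Strong stochastic $\phi$-quasi-Fej\'er monotonicity w.r.t.\ $S$ means: $\mathbb{E}[\phi(z,x_{n+1})\mid\mathsf{F}_n]\le(1+\zeta_n)\phi(z,x_n)+\xi_n$ a.s.\ for all $n\in\mathbb{N}$ and all $X$-valued $\mathsf{F}_n$-measurable random variables $z$ with $z\in S$ a.s.\ and $\mathbb{E}[\phi(z,x_n)]<\infty$. *)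

(* Defs.v *)
From HB Require Import structures.
From mathcomp Require Import all_boot all_order all_algebra.
From mathcomp Require Import all_classical all_reals all_analysis measurable_realfun.
Set Implicit Arguments. Unset Strict Implicit. Unset Printing Implicit Defensive.
Import Order.TTheory GRing.Theory Num.Theory numFieldNormedType.Exports.
Local Open Scope classical_set_scope.
Local Open Scope ring_scope.

Definition borel_sets (T : topologicalType) : set (set T) := <<s open >>.

Definition separable_space (T : topologicalType) : Prop :=
  exists D : set T, countable D /\ dense D.

Definition meas_to_borel {Om : Type} (X : topologicalType)
  (G : set (set Om)) (f : Om -> X) : Prop :=
  forall B, borel_sets B -> G (f @^-1` B).

Definition meas_real {Om : Type} {R : realType}
  (G : set (set Om)) (f : Om -> R) : Prop :=
  forall U : set R, measurable U -> G (f @^-1` U).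

Definition meas_ereal {Om : Type} {R : realType}
  (G : set (set Om)) (f : Om -> \bar R) : Prop :=
  forall U : set (\bar R), measurable U -> G (f @^-1` U).

Definition filtration {d} {Om : measurableType d} (F : nat -> set (set Om)) :=
  (forall n, sigma_algebra setT (F n)) /\
  (forall n, F n `<=` measurable) /\
  (forall n m, (n <= m)%N -> F n `<=` F m).

Definition caratheodory {R : realType} (X : topologicalType) (phi : X -> X -> R) :=
  (forall y, continuous (fun x => phi x y)) /\
  (forall x, meas_real (@borel_sets X) (fun y => phi x y)).

Definition weak_quasi_triangle {R : realType} (X : Type) (phi : X -> X -> R)
  (H : R -> R) :=
  forall x y o, phi x y <= H (phi x o + phi y o).

Definition ell1_plus {d} {R : realType} {Om : measurableType d}
  (P : probability Om R) (F : nat -> set (set Om)) (xi : nat -> Om -> R) :=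
  (forall n w, 0 <= xi n w) /\ (forall n, meas_real (F n) (xi n)) /\
  {ae P, forall w, (\sum_(0 <= n <oo) (xi n w)%:E < +oo)%E}.

Definition is_cond_exp {d} {R : realType} {Om : measurableType d}
  (P : probability Om R) (G : set (set Om)) (Y W : Om -> \bar R) :=
  meas_ereal G W /\
  forall A, G A -> (\int[P]_(w in A) Y w = \int[P]_(w in A) W w)%E.

(* E[Y | G] <= Z almost surely (for every, equivalently some, version) *)
Definition cond_exp_le {d} {R : realType} {Om : measurableType d}
  (P : probability Om R) (G : set (set Om)) (Y Z : Om -> \bar R) :=
  forall W, is_cond_exp P G Y W -> {ae P, forall w, (W w <= Z w)%E}.

Definition stoch_qF {d} {R : realType} {Om : measurableType d}
  (P : probability Om R) (F : nat -> set (set Om)) (X : Type)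
  (phi : X -> X -> R) (S : set X) (x : nat -> Om -> X)
  (zeta xi : nat -> Om -> R) :=
  forall n (z : X), S z ->
    cond_exp_le P (F n) (fun w => (phi z (x n.+1 w))%:E)
      (fun w => ((1 + zeta n w) * phi z (x n w) + xi n w)%:E).

Definition strong_stoch_qF {d} {R : realType} {Om : measurableType d}
  (P : probability Om R) (F : nat -> set (set Om)) (X : topologicalType)
  (phi : X -> X -> R) (S : set X) (x : nat -> Om -> X)
  (zeta xi : nat -> Om -> R) :=
  forall n (z : Om -> X), meas_to_borel (F n) z ->
    {ae P, forall w, S (z w)} ->
    (\int[P]_w (phi (z w) (x n w))%:E < +oo)%E ->
    cond_exp_le P (F n) (fun w => (phi (z w) (x n.+1 w))%:E)
      (fun w => ((1 + zeta n w) * phi (z w) (x n w) + xi n w)%:E).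

(* Main.v *)
Require Import Defs.
From HB Require Import structures.
From mathcomp Require Import all_boot all_order all_algebra.
From mathcomp Require Import all_classical all_reals all_analysis measurable_realfun.
From mathcomp Require Import lra zify.
Import Order.TTheory GRing.Theory Num.Theory numFieldNormedType.Exports.
Local Open Scope classical_set_scope.
Local Open Scope ring_scope.

Section GSig.
Context (R : realType) (d : measure_display) (Om : measurableType d)
  (P : probability Om R) (G : set (set Om)).
Hypotheses (sG : sigma_algebra setT G) (GM : G `<=` measurable).

Local Notation TG := (g_sigma_algebraType G).

Lemma mTGE : (measurable : set (set TG)) = G.
Proof. exact: measurable_g_measurableTypeE. Qed.

Lemma mTG_meas (A : set TG) : measurable A -> measurable (A : set Om).
Proof. by rewrite mTGE => /GM. Qed.

Lemma mfunTG d2 (T2 : measurableType d2) (f : TG -> T2) :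
  measurable_fun setT f -> measurable_fun (setT : set Om) (f : Om -> T2).
Proof.
move=> mf _ Y mY; exact: (mTG_meas _ (mf measurableT Y mY)).
Qed.

Definition idG : Om -> TG := id.
Lemma idG_meas : measurable_fun setT idG.
Proof. by move=> _ Y mY; rewrite setTI; exact: mTG_meas. Qed.

HB.instance Definition _ := isMeasurableFun.Build _ _ Om TG idG idG_meas.

Definition muG := distribution P idG.

Lemma transferG (B : set Om) (g : TG -> \bar R) : G B ->
  measurable_fun setT g -> (forall w, (0 <= g w)%E) ->
  (\int[muG]_(w in (B : set TG)) g w = \int[P]_(w in B) g w)%E.
Proof.
move=> GB mg g0.
have mB : measurable (B : set TG) by rewrite mTGE.
rewrite /muG /distribution ge0_integral_pushforward //.
exact: measurable_funTS.
Qed.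

Section Exist.
Variable Y : Om -> R.
Hypotheses (Y0 : forall w, 0 <= Y w) (mY : measurable_fun setT Y).

Definition Yj (j : nat) (w : Om) : R := Num.min (Y w) j.+1%:R - Num.min (Y w) j%:R.

Lemma Yj_ge0 j w : 0 <= Yj j w.
Proof.
by rewrite /Yj subr_ge0 le_min2 // ler_nat.
Qed.

Lemma Yj_le1 j w : Yj j w <= 1.
Proof.
rewrite /Yj -natr1.
have := ler0n R j.
case: (lerP (Y w) j%:R) => h1; case: (lerP (Y w) (j%:R + 1)) => h2 h3; lra.
Qed.

Lemma mYj j : measurable_fun setT (Yj j).
Proof.
apply: measurable_funB; apply: measurable_minr => //; exact: measurable_cst.
Qed.

Lemma sumYj w N : (\sum_(0 <= j < N) (Yj j w)%:E)%E = (Num.min (Y w) N%:R)%:E.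
Proof.
elim: N => [|N IH]; first by rewrite big_nil min_r.
by rewrite big_nat_recr //= IH -EFinD /Yj addrC subrK.
Qed.

Lemma seriesYj w : (\sum_(0 <= j <oo) (Yj j w)%:E)%E = (Y w)%:E.
Proof.
apply: cvg_lim => //.
apply: cvg_near_cst.
have [N hN] : exists N : nat, Y w <= N%:R.
  exists (Num.bound (Y w)); apply: ltW; exact: (@archi_boundP R).
near=> k.
rewrite sumYj min_l // (le_trans hN) // ler_nat.
by near: k; exact: nbhs_infty_ge.
Unshelve. all: by end_near.
Qed.


Lemma mYjE j : measurable_fun setT (fun w => (Yj j w)%:E).
Proof. exact/measurable_EFinP/mYj. Qed.

Definition nuj (j : nat) (B : set TG) : \bar R :=
  (\int[P]_(w in (B : set Om)) (Yj j w)%:E)%E.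

Let nuj0 j : nuj j set0 = 0%E.
Proof. by rewrite /nuj integral_set0. Qed.

Let nuj_ge0 j B : (0 <= nuj j B)%E.
Proof. by apply: integral_ge0 => w _; rewrite lee_fin Yj_ge0. Qed.

Let nuj_ssa j : semi_sigma_additive (nuj j).
Proof.
move=> F mF tF mUF.
apply: (@semi_sigma_additive_nng_induced _ _ _ P (fun w => (Yj j w)%:E)).
- exact: mYjE.
- by move=> w; rewrite lee_fin Yj_ge0.
- by move=> i; exact: mTG_meas.
- exact: tF.
- exact: mTG_meas.
Qed.

HB.instance Definition _ j := isMeasure.Build _ TG R (nuj j) (nuj0 j) (@nuj_ge0 j) (@nuj_ssa j).

Let nuj_fin j : fin_num_fun (nuj j).
Proof.
move=> B mB; rewrite ge0_fin_numE ?nuj_ge0 //.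
apply: (@le_lt_trans _ _ (\int[P]_(w in (B : set Om)) (cst 1%E w))%E).
  apply: ge0_le_integral => //.
  - exact: mTG_meas.
  - by move=> w _; rewrite lee_fin Yj_ge0.
  - exact: measurable_funTS (mYjE j).
  - by move=> w _ /=; rewrite lee_fin; exact: Yj_le1.
rewrite integral_cst //; last exact: mTG_meas.
rewrite mul1e (@le_lt_trans _ _ 1%E) ?ltey //.
by rewrite -(probability_setT P); apply: le_measure; rewrite ?inE //; exact: mTG_meas.
Qed.

HB.instance Definition _ j := Measure_isFinite.Build _ TG R (nuj j) (@nuj_fin j).

Lemma nuj_dom j : nuj j `<< muG.
Proof.
move=> B hB A mA AB.
rewrite /nuj null_set_integral //.
- exact: mTG_meas.
- exact: measurable_funTS (mYjE j).
- exact: (hB A mA AB).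
Qed.

Lemma cond_exists : exists W : Om -> \bar R, meas_ereal G W /\
  (forall w, (0 <= W w)%E) /\
  (forall A, G A -> \int[P]_(w in A) W w = \int[P]_(w in A) (Y w)%:E)%E.
Proof.
have [g Hg] := choice (fun j => radon_nikodym_sigma_finite (nuj_dom j)).
have g0 j w : (0 <= g j w)%E by case: (Hg j) => + _ _ _; apply.
have mg j : measurable_fun (setT : set TG) (g j).
  by case: (Hg j) => _ _ + _; exact: measurable_int.
have gE j (B : set TG) : measurable B -> nuj j B = (\int[muG]_(x in B) g j x)%E.
  by case: (Hg j) => _ _ _; apply.
pose W w := (\sum_(0 <= j <oo) g j w)%E.
have mW : measurable_fun (setT : set TG) W.
  exact: ge0_emeasurable_sum.
have W0 w : (0 <= W w)%E.
  by apply: nneseries_ge0 => j _ _; exact: g0.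
exists W; split.
  move=> U mU; have := mW measurableT U mU; rewrite mTGE setTI; exact.
split => // A GA.
have mA : measurable (A : set TG) by rewrite mTGE.
rewrite -transferG //.
rewrite integral_nneseries //; last by move=> j; exact: measurable_funTS.
transitivity (\sum_(0 <= j <oo) nuj j A)%E.
  by apply: eq_eseriesr => j _; rewrite gE.
rewrite /nuj -integral_nneseries //.
- by apply: eq_integral => w _; rewrite seriesYj.
- exact: GM.
- by move=> j; exact: measurable_funTS (mYjE j).
- by move=> j w _; rewrite lee_fin Yj_ge0.
Qed.

End Exist.

End GSig.


Definition Jc {T : Type} (C : nat -> set T) (w : T) : nat :=
  match pselect (exists j, C j w) with
  | left h => ex_minn (P := fun j => `[< C j w >])
       (let: ex_intro j hj := h in ex_intro _ j (asboolT hj))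
  | right _ => 0%N end.

Section Piece.
Context d (T : measurableType d).

Lemma JcP (C : nat -> set T) w : (exists j, C j w) ->
  C (Jc C w) w /\ (forall i, C i w -> (Jc C w <= i)%N).
Proof.
rewrite /Jc; case: pselect => // h _.
case: ex_minnP => m /asboolP Cm mmin; split => // i Ci; apply: mmin.
exact/asboolP.
Qed.

Lemma Jc0 (C : nat -> set T) w : ~ (exists j, C j w) -> Jc C w = 0%N.
Proof. by rewrite /Jc; case: pselect. Qed.

Lemma mJc (C : nat -> set T) : (forall j, measurable (C j)) -> forall j, measurable (Jc C @^-1` [set j]).
Proof.
move=> mC j.
have -> : Jc C @^-1` [set j] = (C j `\` \bigcup_(i in [set i | (i < j)%N]) C i)
   `|` (if j == 0%N then ~` \bigcup_i C i else set0).
  apply/seteqP; split => w /=.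
    move=> Jw; have [ex|nex] := pselect (exists j, C j w).
      have [CJ Jmin] := @JcP C w ex; left; split; first by rewrite -Jw.
      move=> [i /= ij Ci]; have := Jmin i Ci; rewrite Jw; lia.
    right; rewrite -Jw (@Jc0 C w) //= => -[i _ Ci]; apply: nex; by exists i.
  case.
    move=> [Cj nCi]; have ex : exists j, C j w by exists j.
    have [CJ Jmin] := @JcP C w ex; apply/eqP; rewrite eqn_leq Jmin //=.
    rewrite leqNgt; apply/negP => lt; apply: nCi; by exists (Jc C w).
  case: eqP => // -> nC; apply: (@Jc0 C w) => -[i Ci]; apply: nC; by exists i.
apply: measurableU.
  apply: measurableD => //; exact: bigcup_measurable.
case: eqP => // _; apply: measurableC; exact: bigcup_measurable.
Qed.

Lemma mpiece d' (U : measurableType d') (C : nat -> set T) (g : nat -> T -> U) :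
  (forall j, measurable (C j)) -> (forall j, measurable_fun setT (g j)) ->
  measurable_fun setT (fun w => g (Jc C w) w).
Proof.
move=> mC mg _ B mB; rewrite setTI.
have -> : (fun w => g (Jc C w) w) @^-1` B =
   \bigcup_j (Jc C @^-1` [set j] `&` g j @^-1` B).
  apply/seteqP; split => w /=.
    by move=> h; exists (Jc C w) => //.
  by move=> [j _ [/= <-]].
apply: bigcup_measurable => j _; apply: measurableI; first exact: mJc.
by rewrite -[X in measurable X]setTI; exact: mg.
Qed.

End Piece.


Section Dense.
Context (R : realType) (X : completePseudoMetricType R).

Definition rk (k : nat) : R := k.+1%:R^-1.

Lemma rk_gt0 k : 0 < rk k.
Proof. by rewrite /rk invr_gt0 ltr0n. Qed.

Lemma rk_small (eps : R) : 0 < eps -> exists K, forall k, (K <= k)%N -> rk k < eps.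
Proof.
move=> e0; case: (near_infty_natSinv_lt (PosNum e0)) => K _ HK.
by exists K => k Kk; exact: HK.
Qed.

Lemma rk_le k l : (k <= l)%N -> rk l <= rk k.
Proof.
by move=> kl; rewrite /rk lef_pV2 ?posrE ?ltr0n // ler_nat ltnS.
Qed.

Lemma dense_seq : separable_space X ->
  exists e : nat -> X, forall (x : X) (r : R), 0 < r -> exists j, ball x r (e j).
Proof.
move=> [D [cD dD]].
have /pcard_surjP [g gs] := cD.
exists g => x r r0.
have [y [Oy Dy]] : (ball x r)° `&` D !=set0.
  apply: dD; last exact: open_interior.
  by exists x; case: (open_nbhs_ball x (PosNum r0)).
have [j _ gj] := gs y Dy.
by exists j; rewrite gj; apply: interior_subset.
Qed.

Lemma dense_int (e : nat -> X) :
  (forall (x : X) (r : R), 0 < r -> exists j, ball x r (e j)) ->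
  forall (x : X) (r : R), 0 < r -> exists j, (ball (e j) r)° x.
Proof.
move=> eD x r r0.
have r20 : 0 < r / 2 by rewrite divr_gt0.
have [j hj] := eD x _ r20.
exists j.
have : (ball x (r / 2))° `<=` (ball (e j) r)°.
  apply: interiorS => y xy.
  have := ball_triangle (ball_sym hj) xy.
  by rewrite -splitr.
by apply; case: (open_nbhs_ball x (PosNum r20)).
Qed.

Lemma dense_seqS (S : set X) : separable_space X -> S !=set0 ->
  exists eS : nat -> X, (forall n, S (eS n)) /\
    forall x, S x -> forall r : R, 0 < r -> exists j, ball x r (eS j).
Proof.
move=> hsep; case=> o0 oS.
have [e eD] := dense_seq hsep.
have hf : forall p : nat * nat, exists s, S s /\
   ((exists t, S t /\ ball (e p.1) (rk p.2) t) -> ball (e p.1) (rk p.2) s).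
  move=> p; have [[t [St bt]]|nt] := pselect (exists t, S t /\ ball (e p.1) (rk p.2) t).
    by exists t; split.
  by exists o0; split.
have [f fH] := choice hf.
exists (fun n => match unpickle n with Some p => f p | None => o0 end).
split.
  by move=> n; case: unpickle => [p|] //; case: (fH p).
move=> x Sx r r0.
have r20 : 0 < r / 2 by rewrite divr_gt0.
have [K HK] := rk_small _ r20.
have [i hi] := eD x _ (rk_gt0 K).
exists (pickle (i, K)); rewrite pickleK.
case: (fH (i, K)) => _ /= H.
have := H (ex_intro _ x (conj Sx (ball_sym hi))).
move=> /(ball_triangle hi) hb.
apply: le_ball hb.
have := HK K (leqnn K); lra.
Qed.

End Dense.


Lemma limn_einf_le_ev (R : realType) (u : (\bar R)^nat) (b : \bar R) :
  (exists K, forall m, (K <= m)%N -> (u m <= b)%E) -> (limn_einf u <= b)%E.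
Proof.
move=> [K HK].
rewrite limn_einf_lim (cvg_lim _ (@cvg_einfs_sup _ u)) //.
apply: ub_ereal_sup => _ [n _ <-].
apply: (@le_trans _ _ (u (maxn n K))).
  by apply: ereal_inf_lbound; exists (maxn n K) => //=; rewrite leq_maxl.
by apply: HK; rewrite leq_maxr.
Qed.

Section Basic.
Context {R : realType} {X : completePseudoMetricType R} {d : measure_display}
  {Om : measurableType d}.

Lemma borel_open (O : set X) : open O -> borel_sets O.
Proof. by move=> oO; apply: sub_sigma_algebra. Qed.

Lemma mtb_open (G : set (set Om)) (z : Om -> X) (O : set X) :
  meas_to_borel G z -> open O -> G (z @^-1` O).
Proof. by move=> mz oO; apply: mz; exact: borel_open. Qed.

Lemma meas_realE (G : set (set Om)) (f : Om -> R) : sigma_algebra setT G ->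
  meas_real G f <-> measurable_fun (setT : set (g_sigma_algebraType G)) f.
Proof.
move=> sG; split.
  by move=> mf _ U mU; rewrite setTI mTGE //; exact: mf.
by move=> mf U mU; have := mf measurableT U mU; rewrite setTI mTGE.
Qed.

Lemma meas_erealE (G : set (set Om)) (f : Om -> \bar R) : sigma_algebra setT G ->
  meas_ereal G f <-> measurable_fun (setT : set (g_sigma_algebraType G)) f.
Proof.
move=> sG; split.
  by move=> mf _ U mU; rewrite setTI mTGE //; exact: mf.
by move=> mf U mU; have := mf measurableT U mU; rewrite setTI mTGE.
Qed.

Lemma meas_real_meas (G : set (set Om)) (f : Om -> R) : G `<=` measurable ->
  meas_real G f -> measurable_fun setT f.
Proof. by move=> GM mf _ U mU; rewrite setTI; apply: GM; exact: mf. Qed.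

Lemma meas_ereal_meas (G : set (set Om)) (f : Om -> \bar R) : G `<=` measurable ->
  meas_ereal G f -> measurable_fun setT f.
Proof. by move=> GM mf _ U mU; rewrite setTI; apply: GM; exact: mf. Qed.

Lemma mtb_cst (G : set (set Om)) (s : X) : sigma_algebra setT G ->
  meas_to_borel G (fun _ : Om => s).
Proof.
move=> [G0 GC _] B _; rewrite preimage_cst; case: ifPn => _ //.
by rewrite -(setD0 setT); apply: GC.
Qed.

Lemma cvg_rk (u : nat -> X) (p : X) : (forall k, ball p (rk R k) (u k)) ->
  u @ \oo --> p.
Proof.
move=> hu; apply/cvg_ballP => e e0.
have [K HK] := @rk_small _ _ e0.
exists K => // k /= Kk; apply: le_ball (hu k); exact/ltW/HK.
Qed.

End Basic.

Section Main.
Context (R : realType) (X : completePseudoMetricType R) (d : measure_display)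
  (Om : measurableType d) (P : probability Om R) (F : nat -> set (set Om))
  (S : set X) (phi : X -> X -> R) (x : nat -> Om -> X) (zeta xi : nat -> Om -> R).
Hypotheses (hsep : separable_space X) (hF : filtration F) (Sne : S !=set0)
  (phi0 : forall a b, 0 <= phi a b) (hcar : caratheodory phi)
  (hx : forall n, meas_to_borel (F n) (x n))
  (hzeta : ell1_plus P F zeta) (hxi : ell1_plus P F xi)
  (hqF : stoch_qF P F phi S x zeta xi) (Scl : closed S).

Let sF n : sigma_algebra setT (F n). Proof. by case: hF. Qed.
Let FM n : F n `<=` measurable. Proof. by case: hF => _ []. Qed.
Let Fmono n m : (n <= m)%N -> F n `<=` F m. Proof. by case: hF => _ [] _; apply. Qed.

Lemma mtb_mono n m (z : Om -> X) : (n <= m)%N -> meas_to_borel (F n) z ->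
  meas_to_borel (F m) z.
Proof. by move=> nm mz B bB; apply: Fmono nm _ (mz B bB). Qed.

Lemma mphi_const (G : set (set Om)) (y : Om -> X) s :
  meas_to_borel G y -> meas_real G (fun w => phi s (y w)).
Proof. by move=> my U mU; exact: (my _ (hcar.2 s U mU)). Qed.

Lemma JM (G : set (set Om)) (sG : sigma_algebra setT G) (z y : Om -> X) :
  meas_to_borel G z -> meas_to_borel G y -> meas_real G (fun w => phi (z w) (y w)).
Proof.
move=> mz my.
have [e eD] := @dense_seq _ _ hsep.
pose C k j := z @^-1` (ball (e j) (rk R k))°.
have mC k j : measurable (C k j : set (g_sigma_algebraType G)).
  by rewrite mTGE //; exact: (@mtb_open _ _ _ _ G z _ mz (open_interior _)).
have cov k w : exists j, C k j w := @dense_int _ _ _ eD (z w) _ (rk_gt0 R k).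
pose fk : nat -> g_sigma_algebraType G -> R := fun k w => phi (e (Jc (C k) w)) (y w).
apply/meas_realE => //.
apply: (@measurable_fun_cvg _ (g_sigma_algebraType G) _ _ fk).
  move=> k; apply: (@mpiece _ (g_sigma_algebraType G) _ _ (C k) (fun j w => phi (e j) (y w))) => // j; apply/meas_realE => //; exact: mphi_const.
move=> w _.
have hb k : ball (z w) (rk R k) (e (Jc (C k) w)).
  apply: ball_sym; apply: interior_subset; exact: (@JcP _ (g_sigma_algebraType G) (C k) w (cov k w)).1.
have cv := @cvg_rk _ _ _ _ hb.
exact: (cvg_comp _ _ cv (hcar.1 (y w) (z w))).
Qed.

Definition Zf n (z : Om -> X) (w : Om) : \bar R :=
  ((1 + zeta n w) * phi (z w) (x n w) + xi n w)%:E.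

Lemma Zf_ge0 n z w : (0 <= Zf n z w)%E.
Proof.
rewrite /Zf lee_fin; apply: addr_ge0; last by case: hxi => + _; apply.
apply: mulr_ge0 => //; apply: addr_ge0 => //; by case: hzeta => + _; apply.
Qed.

Lemma mZf n (z : Om -> X) : meas_to_borel (F n) z ->
  measurable_fun (setT : set (g_sigma_algebraType (F n))) (Zf n z).
Proof.
move=> mz; apply/measurable_EFinP.
have mze : measurable_fun (setT : set (g_sigma_algebraType (F n))) (zeta n).
  by apply/meas_realE => //; case: hzeta => _ [+ _]; apply.
have mxi : measurable_fun (setT : set (g_sigma_algebraType (F n))) (xi n).
  by apply/meas_realE => //; case: hxi => _ [+ _]; apply.
apply: measurable_funD => //; apply: measurable_funM.
  by apply: measurable_funD => //; exact: measurable_cst.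
by apply/meas_realE => //; apply: JM => //.
Qed.

Lemma mZf_Om n (z : Om -> X) : meas_to_borel (F n) z ->
  measurable_fun setT (Zf n z).
Proof. by move=> mz; apply: (@meas_ereal_meas _ _ _ (F n) _ (FM n)); apply/meas_erealE => //; exact: mZf. Qed.

Lemma Yconst n s : S s -> forall B, F n B ->
  (\int[P]_(w in B) (phi s (x n.+1 w))%:E <= \int[P]_(w in B) Zf n (fun=> s) w)%E.
Proof.
move=> Ss B FB.
have mY : measurable_fun setT (fun w => phi s (x n.+1 w)).
  exact: (@meas_real_meas _ _ _ (F n.+1) _ (FM n.+1) (@mphi_const (F n.+1) (x n.+1) s (hx n.+1))).
have [W [mW [W0 WE]]] := @cond_exists _ _ _ P _ (sF n) (FM n) _ (fun w => phi0 s (x n.+1 w)) mY.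
have hle := hqF n s Ss W (conj mW (fun A GA => esym (WE A GA))).
rewrite -WE //.
apply: ae_ge0_le_integral => //.
- exact: (FM n B FB).
- exact: measurable_funTS (@meas_ereal_meas _ _ _ (F n) _ (FM n) mW).
- by move=> w _; exact: Zf_ge0.
- apply: measurable_funTS; apply: mZf_Om; exact: mtb_cst.
- by apply: filterS hle => w h _; exact: h.
Qed.


Lemma FI n A B : F n A -> F n B -> F n (A `&` B).
Proof.
move=> FA FB.
have : measurable ((A `&` B) : set (g_sigma_algebraType (F n))).
  by apply: measurableI; rewrite mTGE.
by rewrite mTGE.
Qed.

Lemma Zfin n (z : Om -> X) (M : R) (A : set Om) : 0 <= M ->
  meas_to_borel (F n) z -> F n A ->
  A `<=` [set w | S (z w) /\ zeta n w <= M /\ xi n w <= M /\ phi (z w) (x n w) <= M] ->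
  (\int[P]_(w in A) Zf n z w)%E \is a fin_num.
Proof.
move=> M0 mz FA AB.
have mA : measurable A := FM n A FA.
have mZ : measurable_fun setT (Zf n z) := @mZf_Om n z mz.
rewrite ge0_fin_numE; last by apply: integral_ge0 => w _; exact: Zf_ge0.
apply: (@le_lt_trans _ _ (\int[P]_(w in A) (cst ((1 + M) * M + M)%:E) w)%E).
  apply: ge0_le_integral => //.
  - by move=> w _; exact: Zf_ge0.
  - exact: measurable_funTS.
  - move=> w Aw; have [_ [zM [xM pM]]] := AB w Aw; rewrite /Zf lee_fin /=.
    have ze0 : 0 <= zeta n w by case: hzeta => + _; apply.
    have := phi0 (z w) (x n w).
    nra.
rewrite integral_cst //; apply: (@le_lt_trans _ _ ((1 + M) * M + M)%:E); last exact: ltey.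
rewrite -[leRHS]mule1; apply: lee_wpmul2l; last exact: probability_le1.
by rewrite lee_fin; nra.
Qed.

Lemma Key n (z : Om -> X) (M : R) (A : set Om) : 0 <= M ->
  meas_to_borel (F n) z -> F n A ->
  A `<=` [set w | S (z w) /\ zeta n w <= M /\ xi n w <= M /\ phi (z w) (x n w) <= M] ->
  (\int[P]_(w in A) (phi (z w) (x n.+1 w))%:E <= \int[P]_(w in A) Zf n z w)%E.
Proof.
move=> M0 mz FA AB.
have mA : measurable A := FM n A FA.
have [eS [eSS eSD]] := @dense_seqS _ _ S hsep Sne.
pose C k j := [set w | (ball (eS j) (rk R k))° (z w) /\
   `|phi (z w) (x n w) - phi (eS j) (x n w)| < rk R k].
have mC k j : measurable (C k j : set (g_sigma_algebraType (F n))).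
  have -> : C k j = z @^-1` (ball (eS j) (rk R k))° `&`
     (fun w => `|phi (z w) (x n w) - phi (eS j) (x n w)|) @^-1` `]-oo, rk R k[.
    by apply/seteqP; split => w /=; rewrite in_itv /=.
  apply: measurableI; first by rewrite mTGE //; exact: (@mtb_open _ _ _ _ (F n) z _ mz (open_interior _)).
  have mf : measurable_fun (setT : set (g_sigma_algebraType (F n)))
      (fun w => `|phi (z w) (x n w) - phi (eS j) (x n w)|).
    apply: measurableT_comp; first exact: normr_measurable.
    apply: measurable_funB; apply/meas_realE => //.
      exact: JM.
    exact: mphi_const.
  by rewrite -[X in measurable X]setTI; apply: mf => //; exact: measurable_itv.
have cov k w : A w -> exists j, C k j w.
  move=> Aw; have [Sz [_ [_ _]]] := AB w Aw.
  have [del del0 hdel] : nbhs_ball (z w)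
      (fun x' => ball (phi (z w) (x n w)) (rk R k) (phi x' (x n w))).
    apply/nbhs_ballP; exact: (cvg_ball (hcar.1 (x n w) (z w)) (rk_gt0 R k)).
  have rk20 : 0 < rk R k / 2 by rewrite divr_gt0 // rk_gt0.
  have rho0 : 0 < Num.min del (rk R k / 2) by rewrite lt_min del0 rk20.
  have [j hj] := eSD _ Sz _ rho0.
  exists j; split.
    have : (ball (z w) (rk R k / 2))° `<=` (ball (eS j) (rk R k))°.
      apply: interiorS => y hy.
      have hj2 : ball (z w) (rk R k / 2) (eS j) by apply: le_ball hj; rewrite ge_min lexx orbT.
      have := ball_triangle (ball_sym hj2) hy.
      by rewrite -splitr.
    by apply; case: (open_nbhs_ball (z w) (PosNum rk20)).
  have : ball (z w) del (eS j) by apply: le_ball hj; rewrite ge_min lexx.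
  by move/hdel.
pose J k w := Jc (C k) w.
pose zk k w := eS (J k w).
have hC k w : A w -> C k (J k w) w.
  by move=> Aw; exact: (@JcP _ Om (C k) w (cov k w Aw)).1.
have mCO k j : measurable (C k j).
  by have := mC k j; rewrite mTGE // => /(FM n).
have mJ k j : F n (J k @^-1` [set j]).
  by have := @mJc _ (g_sigma_algebraType (F n)) (C k) (mC k) j; rewrite mTGE.
pose fk k w := (phi (zk k w) (x n.+1 w))%:E.
have mfk k : measurable_fun setT (fk k).
  apply/measurable_EFinP.
  apply: (@mpiece _ Om _ _ (C k) (fun j w => phi (eS j) (x n.+1 w))) => // j.
  exact: (@meas_real_meas _ _ _ (F n.+1) _ (FM n.+1) (@mphi_const (F n.+1) (x n.+1) (eS j) (hx n.+1))).
have fk0 k w : (0 <= fk k w)%E by rewrite lee_fin.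
have mZk k : measurable_fun setT (Zf n (zk k)).
  apply: (@mpiece _ Om _ _ (C k) (fun j => Zf n (fun=> eS j))) => // j.
  apply: mZf_Om; exact: mtb_cst.
have mZ : measurable_fun setT (Zf n z) := @mZf_Om n z mz.
have step1 k : (\int[P]_(w in A) fk k w <= \int[P]_(w in A) Zf n (zk k) w)%E.
  pose Aj j := A `&` J k @^-1` [set j].
  have FAj j : F n (Aj j) := @FI n _ _ FA (mJ k j).
  have AE : A = \bigcup_j Aj j.
    apply/seteqP; split => w.
      by move=> Aw; exists (J k w).
    by move=> [j _ []].
  have tA : trivIset setT Aj.
    apply/trivIsetP => i j _ _ ij; apply/seteqP; split => // w [[_ /= iw] [_ /= jw]].
    by move: ij; rewrite -iw -jw eqxx.
  have eqU g : measurable_fun setT g -> (forall w, 0 <= g w)%E ->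
      (\int[P]_(w in A) g w = \sum_(0 <= j <oo) \int[P]_(w in Aj j) g w)%E.
    move=> mg g0; rewrite AE; apply: ge0_integral_bigcup => //.
    - by move=> j; exact: (FM n _ (FAj j)).
    - exact: measurable_funTS.
  rewrite (eqU _ (mfk k) (fk0 k)) (eqU _ (mZk k) (fun w => Zf_ge0 n (zk k) w)).
  apply: lee_nneseries => [j _ _|j _]; first by apply: integral_ge0 => w _; exact: fk0.
  have -> : (\int[P]_(w in Aj j) fk k w = \int[P]_(w in Aj j) (phi (eS j) (x n.+1 w))%:E)%E.
    by apply: eq_integral => w /set_mem [_ /= Jw]; rewrite /fk /zk Jw.
  have -> : (\int[P]_(w in Aj j) Zf n (zk k) w = \int[P]_(w in Aj j) Zf n (fun=> eS j) w)%E.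
    by apply: eq_integral => w /set_mem [_ /= Jw]; rewrite /Zf /zk Jw.
  exact: Yconst.
have step2 k : (\int[P]_(w in A) Zf n (zk k) w <=
    \int[P]_(w in A) Zf n z w + ((1 + M) * rk R k)%:E)%E.
  apply: (@le_trans _ _ (\int[P]_(w in A) (Zf n z w + ((1 + M) * rk R k)%:E))%E).
    apply: ge0_le_integral => //.
    - by move=> w _; exact: Zf_ge0.
    - exact: measurable_funTS.
    - apply: measurable_funTS; apply: emeasurable_funD => //; exact: measurable_cst.
    - move=> w Aw; have [_ [zM [_ _]]] := AB w Aw.
      have [_ hph] := hC k w Aw.
      have ze0 : 0 <= zeta n w by case: hzeta => + _; apply.
      have rk0 := rk_gt0 R k.
      move: hph; rewrite /Zf /zk -EFinD lee_fin ltr_norml => /andP[h1 h2].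
      nra.
  have c0 : (0 <= ((1 + M) * rk R k)%:E)%E.
    by rewrite lee_fin; apply: mulr_ge0; [apply: addr_ge0 | apply: ltW; exact: rk_gt0].
  rewrite (ge0_integralD P mA (fun w _ => Zf_ge0 n z w) (measurable_funTS mZ)
     (fun w _ => c0) (measurable_cst _)).
  apply: leeD2l.
  rewrite integral_cst // -[leRHS]mule1; apply: lee_wpmul2l.
    exact: c0.
  exact: probability_le1.
have Zb : (\int[P]_(w in A) Zf n z w)%E \is a fin_num.
  rewrite ge0_fin_numE; last by apply: integral_ge0 => w _; exact: Zf_ge0.
  apply: (@le_lt_trans _ _ (\int[P]_(w in A) (cst ((1 + M) * M + M)%:E) w)%E).
    apply: ge0_le_integral => //.
    - by move=> w _; exact: Zf_ge0.
    - exact: measurable_funTS.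
    - move=> w Aw; have [_ [zM [xM pM]]] := AB w Aw; rewrite /Zf lee_fin /=.
      have ze0 : 0 <= zeta n w by case: hzeta => + _; apply.
      have := phi0 (z w) (x n w).
      nra.
  rewrite integral_cst //; apply: (@le_lt_trans _ _ ((1 + M) * M + M)%:E); last exact: ltey.
  rewrite -[leRHS]mule1; apply: lee_wpmul2l; last exact: probability_le1.
  by rewrite lee_fin; nra.
have cvY w : A w -> (fun k => fk k w) @ \oo --> (phi (z w) (x n.+1 w))%:E.
  move=> Aw.
  have hb k : ball (z w) (rk R k) (zk k w).
    by apply: ball_sym; apply: interior_subset; exact: (hC k w Aw).1.
  have cv := cvg_comp _ _ (@cvg_rk _ _ _ _ hb) (hcar.1 (x n.+1 w) (z w)).
  apply: cvg_EFin; first exact: nearW.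
  exact: cv.
have HF : (\int[P]_(w in A) (phi (z w) (x n.+1 w))%:E <=
    limn_einf (fun k => \int[P]_(w in A) fk k w))%E.
  rewrite [X in (X <= _)%E](_ : _ = \int[P]_(w in A) limn_einf (fun k => fk k w))%E; last first.
    by apply: eq_integral => w /set_mem Aw; rewrite (cvg_limn_einf_sup (cvY w Aw)).1.
  apply: fatou => // k; exact: measurable_funTS.
apply: (le_trans HF).
apply/lee_addgt0Pr => e e0.
have e'0 : 0 < e / (1 + M) by rewrite divr_gt0 // ltr_pwDl.
have [K HK] := @rk_small _ _ e'0.
apply: limn_einf_le_ev; exists K => k Kk.
apply: (le_trans (step1 k)); apply: (le_trans (step2 k)).
apply: leeD2l; rewrite lee_fin.
have := HK k Kk; rewrite ltr_pdivlMr ?ltr_pwDl // => h.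
by rewrite mulrC ltW.
Qed.


Lemma nat_ge (a : R) : exists N, forall m, (N <= m)%N -> a <= m%:R.
Proof.
exists (Num.bound `|a|) => m hm.
apply: (le_trans (ler_norm a)); apply: ltW.
apply: (lt_le_trans (archi_boundP (normr_ge0 a))).
by rewrite ler_nat.
Qed.

Lemma FleR n (f : Om -> R) c : meas_real (F n) f -> F n [set w | f w <= c].
Proof.
move=> mf; have -> : [set w | f w <= c] = f @^-1` `]-oo, c].
  by apply/seteqP; split => w /=; rewrite in_itv /=.
exact: mf (measurable_itv _).
Qed.

Lemma strong : strong_stoch_qF P F phi S x zeta xi.
Proof.
move=> n z mz Sae _ W [mW WE].
have mWO : measurable_fun setT W := @meas_ereal_meas _ _ _ (F n) _ (FM n) mW.
have mWG : measurable_fun (setT : set (g_sigma_algebraType (F n))) W by apply/meas_erealE.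
pose B (m : nat) := [set w | S (z w) /\ zeta n w <= m%:R /\ xi n w <= m%:R /\
   phi (z w) (x n w) <= m%:R].
pose Am m := B m `&` [set w | (Zf n z w + (rk R m)%:E <= W w)%E].
have FB m : F n (B m).
  have FS : F n (z @^-1` S).
    apply: mz; rewrite -(setCK S); apply: sigma_algebraC.
    exact: borel_open (closed_openC Scl).
  have Fz : F n [set w | zeta n w <= m%:R].
    by apply: FleR; case: hzeta => _ [+ _]; apply.
  have Fxi : F n [set w | xi n w <= m%:R].
    by apply: FleR; case: hxi => _ [+ _]; apply.
  have Fphi : F n [set w | phi (z w) (x n w) <= m%:R].
    by apply: FleR; apply: JM.
  exact: (@FI n _ _ FS (@FI n _ _ Fz (@FI n _ _ Fxi Fphi))).
have FA m : F n (Am m).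
  apply: (@FI n _ _ (FB m)).
  have mf : measurable_fun (setT : set (g_sigma_algebraType (F n)))
      (fun w => Zf n z w + (rk R m)%:E)%E.
    by apply: emeasurable_funD; [exact: mZf | exact: measurable_cst].
  have := measurable_lee measurableT mf mWG.
  by rewrite setTI mTGE.
have PA m : P (Am m) = 0%E.
  have FAm := FA m; have mAm := FM n _ FAm.
  have AB : Am m `<=` B m by move=> w [].
  have hK := @Key n z m%:R _ (ler0n R m) mz FAm AB.
  have hfin := @Zfin n z m%:R _ (ler0n R m) mz FAm AB.
  have c0 : (0 <= (rk R m)%:E)%E by rewrite lee_fin ltW // rk_gt0.
  have hW : (\int[P]_(w in Am m) (Zf n z w + (rk R m)%:E) <= \int[P]_(w in Am m) W w)%E.
    apply: ge0_le_integral => //.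
    - by move=> w _; rewrite adde_ge0 // Zf_ge0.
    - by apply: measurable_funTS; apply: emeasurable_funD; [exact: (@mZf_Om n z mz) | exact: measurable_cst].
    - exact: measurable_funTS.
    - by move=> w [].
  rewrite -WE // in hW.
  have := le_trans hW hK.
  rewrite (ge0_integralD P mAm (fun w _ => Zf_ge0 n z w) (measurable_funTS (@mZf_Om n z mz))
     (fun w _ => c0) (measurable_cst _)).
  rewrite integral_cst // -[X in (_ <= X)%E -> _]adde0 leeD2lE // pmule_rle0 ?lte_fin ?rk_gt0 // => h.
  by apply/eqP; rewrite eq_le h measure_ge0.
apply: (negligibleS _ (negligibleU Sae (negligible_bigcup (fun m => ex_intro _ (Am m) (And3 (FM n _ (FA m)) (PA m) (@subset_refl _ _)))))).
move=> w /= nWZ.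
have [Sz|nS] := pselect (S (z w)); last by left.
right.
have lt : (Zf n z w < W w)%E by rewrite ltNge; apply/negP.
have [K2 H2] := nat_ge (zeta n w).
have [K3 H3] := nat_ge (xi n w).
have [K4 H4] := nat_ge (phi (z w) (x n w)).
case E: (W w) lt => [r| |] lt; last by rewrite ltNge leNye in lt.
- have eps0 : 0 < r - ((1 + zeta n w) * phi (z w) (x n w) + xi n w).
    by rewrite subr_gt0 -lte_fin.
  have [K1 H1] := @rk_small _ _ eps0.
  pose m := maxn (maxn K1 K2) (maxn K3 K4).
  exists m => //; split.
    split => //; split; [apply: H2|split; [apply: H3|apply: H4]]; rewrite /m; lia.
  rewrite /= E /Zf -EFinD lee_fin.
  have := H1 m ltac:(rewrite /m; lia); lra.
- pose m := maxn K2 (maxn K3 K4).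
  exists m => //; split.
    split => //; split; [apply: H2|split; [apply: H3|apply: H4]]; rewrite /m; lia.
  by rewrite /= E leey.
Qed.

End Main.


Theorem proposition4p5 (R : realType) (X : completePseudoMetricType R)
  (d : measure_display) (Om : measurableType d) (P : probability Om R)
  (F : nat -> set (set Om)) (S : set X) (phi : X -> X -> R) (H : R -> R)
  (x : nat -> Om -> X) (zeta xi : nat -> Om -> R) (o : X) :
  hausdorff_space X -> separable_space X ->
  filtration F ->
  S !=set0 -> closed S ->
  (forall a b, 0 <= phi a b) -> caratheodory phi ->
  (forall a, phi a a = 0) ->
  (forall t, 0 <= t -> 0 <= H t) ->
  (forall s t, 0 <= s -> s <= t -> H s <= H t) ->
  (forall s t l, 0 <= s -> 0 <= t -> 0 <= l -> l <= 1 ->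
     l * H s + (1 - l) * H t <= H (l * s + (1 - l) * t)) ->
  weak_quasi_triangle phi H ->
  (forall n, meas_to_borel (F n) (x n)) ->
  ell1_plus P F zeta -> ell1_plus P F xi ->
  stoch_qF P F phi S x zeta xi ->
  S o ->
  (forall n, (\int[P]_w (phi o (x n w))%:E < +oo)%E) ->
  strong_stoch_qF P F phi S x zeta xi.
Proof.
move=> _ hsep hF Sne Scl phi0 hcar _ _ _ _ _ hx hzeta hxi hqF _ _.
exact: (@strong R X d Om P F S phi x zeta xi hsep hF Sne phi0 hcar hx hzeta hxi hqF Scl).
Qed.
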